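(* Let $G$ be a connected graph with $n$ vertices and $m$ edges, and let $r$ be a vertex of $G$. Consider assignments $s$ that map each vertex $v\neq r$ to a neighbour $s(v)$ of $v$, viewed as the directed subgraph with arcs $v\to s(v)$, $v\ne r$. Let $Z_{\mathrm{tree},0}$ be the number of such assignments whose directed subgraph is a (spanning) tree directed towards the root $r$ (equivalently, contains no directed cycle), and let $Z_{\mathrm{tree},1}$ be the number of such assignments whose directed subgraph contains exactly one directed cycle. Then $\frac{Z_{\mathrm{tree},1}}{Z_{\mathrm{tree},0}}\le mn$. *)

(* Defs.v *)
From mathcomp Require Import all_boot all_order all_algebra.
Set Implicit Arguments. Unset Strict Implicit. Unset Printing Implicit Defensive.

Definition simple_graph (T : finType) (e : rel T) : Prop :=
  symmetric e /\ irreflexive e.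

Definition connected_graph (T : finType) (e : rel T) : Prop :=
  forall x y : T, connect e x y.

Definition num_edges (T : finType) (e : rel T) : nat :=
  #|[set E : {set T} | [exists x, exists y, (E == [set x; y]) && e x y]]|.

(* Assignments v |-> s(v), a neighbour of v, for v <> r.  Encoded as finite
   functions with the normalisation s r = r (bijective with the paper's
   assignments, which are undefined at r). *)
Definition assignment (T : finType) (e : rel T) (r : T) (s : {ffun T -> T}) : bool :=
  (s r == r) && [forall v, (v != r) ==> e v (s v)].

(* v lies on a directed cycle of the digraph with arcs v -> s v (v <> r).
   Since s r = r, an orbit reaching r stays there and never comes back. *)
Definition on_cycle (T : finType) (r : T) (s : {ffun T -> T}) (v : T) : bool :=
  (v != r) && [exists k : 'I_#|T|, iter k.+1 s v == v].

Definition acyclic_assignment (T : finType) (r : T) (s : {ffun T -> T}) : bool :=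
  [forall v, ~~ on_cycle r s v].

(* Exactly one directed cycle: some vertex is on a cycle, and all vertices on
   cycles lie on the same cycle (cycles in a functional digraph are disjoint,
   and u, w on cycles lie on the same cycle iff w is reached from u). *)
Definition unicyclic_assignment (T : finType) (r : T) (s : {ffun T -> T}) : bool :=
  [exists v, on_cycle r s v] &&
  [forall u, forall w, (on_cycle r s u && on_cycle r s w) ==>
     [exists k : 'I_#|T|, iter k s u == w]].

Definition Z_tree0 (T : finType) (e : rel T) (r : T) : nat :=
  #|[set s : {ffun T -> T} | assignment e r s && acyclic_assignment r s]|.

Definition Z_tree1 (T : finType) (e : rel T) (r : T) : nat :=
  #|[set s : {ffun T -> T} | assignment e r s && unicyclic_assignment r s]|.

(* Main.v *)
Require Import Defs.
From mathcomp Require Import all_boot all_order all_algebra.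
From mathcomp Require Import zify.
Import Order.TTheory GRing.Theory Num.Theory.
Set Implicit Arguments. Unset Strict Implicit. Unset Printing Implicit Defensive.

Lemma iter_period (T : Type) (f : T -> T) p w j :
  iter p f w = w -> iter (j * p) f w = w.
Proof. move=> H; elim: j => [|j IH] //=; by rewrite mulSn iterD IH H. Qed.

Lemma periodic_noreach (T : finType) (f : T -> T) r w p :
  f r = r -> iter p.+1 f w = w -> fconnect f w r -> w = r.
Proof.
move=> Hr Hw Hc; have Hj := iter_findex Hc; set j := findex f w r in Hj.
rewrite -(iter_period j Hw).
have -> : j * p.+1 = (j * p.+1 - j) + j by rewrite subnK // leq_pmulr.
by rewrite iterD Hj iter_fix.
Qed.

Lemma findex_min (T : finType) (f : T -> T) v a j :
  fconnect f v a -> j < findex f v a -> iter j f v != a.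
Proof.
move=> Hc Hj; apply/eqP=> E.
have Hm := findex_max Hc.
have := findex_iter (ltn_trans Hj Hm); rewrite E => Ej.
by rewrite Ej ltnn in Hj.
Qed.

Lemma reach_agree (T : finType) (f g : T -> T) a v :
  (forall u, u != a -> g u = f u) -> fconnect f v a -> fconnect g v a.
Proof.
move=> Hag Hc.
have H : forall j, j <= findex f v a -> iter j g v = iter j f v.
  elim=> [|j IH] Hj //=; rewrite IH ?(ltnW Hj) // Hag //.
  exact: findex_min.
by rewrite -(iter_findex Hc) -H // fconnect_iter.
Qed.

Lemma reach_chain (T : finType) (f : T -> T) x a b :
  fconnect f x a -> fconnect f x b -> fconnect f a b || fconnect f b a.
Proof.
move=> Ha Hb; rewrite -(iter_findex Ha) -(iter_findex Hb).
set i := findex f x a; set j := findex f x b.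
case: (leqP i j) => H.
  by rewrite -(subnK H) iterD fconnect_iter.
by rewrite -(subnK (ltnW H)) iterD fconnect_iter orbT.
Qed.

Lemma fix_reach (T : finType) (f : T -> T) a v :
  f a = a -> fconnect f a v -> v = a.
Proof. by move=> Ha Hc; rewrite -(iter_findex Hc) iter_fix. Qed.

Lemma cycle_of_noreach (T : finType) (f : {ffun T -> T}) r v :
  ~~ fconnect f v r -> exists w, on_cycle r f w && fconnect f v w.
Proof.
move=> Hv; set o := order f v.
have Hl : iter o f v \in orbit f v by have := looping_order f v.
rewrite -fconnect_orbit in Hl.
have Hi := iter_findex Hl; have Hm := findex_max Hl.
set i := findex f v (iter o f v) in Hi Hm.
exists (iter i f v); apply/andP; split; last exact: fconnect_iter.
apply/andP; split.
  by apply: contra Hv => /eqP <-; apply: fconnect_iter.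
have Ho : o <= #|T| by rewrite /o /order max_card.
have Hk : (o - i).-1 < #|T|.
  by rewrite prednK ?subn_gt0 // (leq_trans _ Ho) // leq_subr.
apply/existsP; exists (Ordinal Hk) => /=.
by rewrite -iterS prednK ?subn_gt0 // -iterD subnK ?(ltnW Hm) // Hi.
Qed.

Definition Fc (T : finType) (s : {ffun T -> T}) c : {ffun T -> T} :=
  [ffun v => if v == c then c else s v].
Definition tt (T : finType) (s : {ffun T -> T}) c x y : {ffun T -> T} :=
  [ffun v => if v == x then y else if fconnect (Fc s c) x v
     then iter (findex (Fc s c) x v).-1 (Fc s c) x else Fc s c v].
Definition dec (T : finType) (t : {ffun T -> T}) x c d : {ffun T -> T} :=
  [ffun v => if v == c then d else
     if fconnect t c v && (findex t c v <= findex t c x)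
     then iter (findex t c v).-1 t c else t v].

Lemma Fc_c (T : finType) (s : {ffun T -> T}) c : Fc s c c = c.
Proof. by rewrite ffunE eqxx. Qed.

Lemma Fc_n (T : finType) (s : {ffun T -> T}) c v : v != c -> Fc s c v = s v.
Proof. by rewrite ffunE => /negbTE ->. Qed.

Lemma iter_inj (T : finType) (f : T -> T) x i j :
  i < order f x -> j < order f x -> iter i f x = iter j f x -> i = j.
Proof. by move=> Hi Hj E; rewrite -(findex_iter Hi) E findex_iter. Qed.

Section Path.
Variables (T : finType) (s : {ffun T -> T}) (c x y : T).
Let F := Fc s c.
Hypothesis HF : fconnect F x c.
Let k := findex F x c.
Let t := tt s c x y.

Lemma k_lt : k < order F x. Proof. exact: findex_max. Qed.
Lemma iter_k : iter k F x = c. Proof. exact: iter_findex. Qed.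

Lemma findex_le v : fconnect F x v -> findex F x v <= k.
Proof.
move=> Hv; rewrite leqNgt; apply/negP => Hlt.
have E := iter_findex Hv.
have : iter (findex F x v) F x = c.
  by rewrite -(subnK (ltnW Hlt)) iterD iter_k iter_fix // Fc_c.
rewrite E => Evc; move: Hlt; by rewrite Evc ltnn.
Qed.

Lemma t_path m : m < k -> t (iter m.+1 F x) = iter m F x.
Proof.
move=> Hm; have Ho := k_lt.
have Hm1 : m.+1 < order F x by apply: leq_ltn_trans Hm _.
rewrite ffunE.
case: eqP => [E|_].
  by have := iter_inj Hm1 (order_gt0 _ _) E.
by rewrite fconnect_iter findex_iter.
Qed.

Lemma t_iter_c m : m <= k -> iter m t c = iter (k - m) F x.
Proof.
elim: m => [|m IH] Hm; first by rewrite subn0 iter_k.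
rewrite iterS IH ?(ltnW Hm) //.
have -> : k - m = (k - m.+1).+1 by rewrite subnS prednK // subn_gt0.
by rewrite t_path // ltn_subrL (leq_ltn_trans _ Hm).
Qed.

Lemma t_out v : ~~ fconnect F x v -> t v = F v.
Proof.
move=> Hv; rewrite ffunE (negbTE Hv); case: eqP => // E.
by rewrite E connect0 in Hv.
Qed.

Lemma k_order_t : k < order t c.
Proof.
have Hx : fconnect t c x by rewrite -[x]/(iter 0 F x) -(subnn k) -t_iter_c // fconnect_iter.
have Hi := findex_max Hx.
case: (leqP k (findex t c x)) => H; first exact: leq_ltn_trans H Hi.
have E := iter_findex Hx; rewrite t_iter_c ?(ltnW H) // in E.
have := iter_inj (j:=0) (leq_ltn_trans (leq_subr _ _) k_lt) (order_gt0 _ _) E.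
by move/eqP; rewrite subn_eq0 leqNgt H.
Qed.

Lemma findex_t m : m <= k -> findex t c (iter m t c) = m.
Proof. move=> Hm; apply: findex_iter; exact: leq_ltn_trans Hm k_order_t. Qed.

Lemma decode : dec t x c (s c) = s.
Proof.
have Hkx : findex t c x = k.
  by rewrite -{1}[x]/(iter 0 F x) -(subnn k) -t_iter_c // findex_t.
apply/ffunP => v; rewrite ffunE Hkx.
case: (eqVneq v c) => [->|Hvc] //.
case Hv: (fconnect F x v).
  have Hj := findex_le Hv; set j := findex F x v in Hj.
  have Ejk : j < k.
    rewrite ltn_neqAle Hj andbT; apply/eqP => Ej.
    by move: Hvc; rewrite -(iter_findex Hv) -/j Ej iter_k eqxx.
  have Ev : v = iter (k - j) t c.
    by rewrite t_iter_c ?leq_subr // subKn ?iter_findex // ltnW.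
  have Eq : iter j F x = v by exact: iter_findex.
  rewrite Ev fconnect_iter findex_t ?leq_subr //=.
  rewrite t_iter_c; last exact: leq_trans (leq_pred _) (leq_subr _ _).
  rewrite [in RHS]t_iter_c ?leq_subr // subKn ?(ltnW Ejk) //.
  have -> : k - (k - j).-1 = j.+1.
    by rewrite -subnS subKn.
  by rewrite iterS Eq Fc_n.
rewrite t_out ?Hv // Fc_n //.
case H2: (fconnect t c v && (findex t c v <= k)) => //.
case/andP: H2 => H2 H3.
by move: (fconnect_iter F (k - findex t c v) x); rewrite -t_iter_c // iter_findex // Hv.
Qed.

End Path.

Lemma acyc_of_reach (T : finType) (t : {ffun T -> T}) r :
  t r = r -> (forall v, fconnect t v r) -> acyclic_assignment r t.
Proof.
move=> Hr H; apply/forallP => v; apply/negP => /andP [Hv /existsP [k /eqP Hk]].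
by move/eqP: Hv; apply; apply: (periodic_noreach Hr Hk).
Qed.

Section Enc.
Variables (T : finType) (e : rel T) (r : T) (s : {ffun T -> T}) (c x y : T).
Hypothesis Hsym : symmetric e.
Hypothesis Hsr : s r = r.
Hypothesis Hse : forall v, v != r -> e v (s v).
Hypothesis HU : forall w, on_cycle r s w -> fconnect s w c.
Hypothesis Hcyc : on_cycle r s c.
Hypothesis Hx : fconnect s x c.
Hypothesis Hy : fconnect s y r.
Hypothesis Hxy : e x y.
Let F := Fc s c.
Let t := tt s c x y.
Let k := findex F x c.

Lemma c_ne_r : c != r. Proof. by case/andP: Hcyc. Qed.

Lemma c_noreach : ~~ fconnect s c r.
Proof.
apply/negP => H; case/andP: Hcyc => /eqP Hc /existsP [j /eqP Hj].
by apply: Hc; apply: (periodic_noreach Hsr Hj).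
Qed.

Lemma notB v : fconnect s v r -> ~~ fconnect s v c.
Proof.
move=> Hr; apply/negP => Hc.
case/orP: (reach_chain Hc Hr) => H.
  by move: c_noreach; rewrite H.
by move: c_ne_r; rewrite (fix_reach Hsr H) eqxx.
Qed.

Lemma HF : fconnect F x c.
Proof. by apply: reach_agree Hx => u Hu; rewrite Fc_n. Qed.

Lemma inP_B v : fconnect F x v -> fconnect s v c.
Proof.
move=> Hv; case/orP: (reach_chain Hv HF) => H.
  by apply: reach_agree H => u Hu; rewrite /F Fc_n.
by rewrite -(fix_reach (Fc_c s c) H) connect0.
Qed.

Lemma x_ne_r : x != r.
Proof. by apply/eqP => E; move: (notB (connect0 _ r)); rewrite -{1}E Hx. Qed.

Lemma t_eq_s v : fconnect s v r -> t v = s v.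
Proof.
move=> Hv; have HvB := notB Hv.
have HvP : ~~ fconnect F x v by apply: contra HvB; apply: inP_B.
rewrite /t t_out // Fc_n //; apply: contra HvB => /eqP ->; exact: connect0.
Qed.

Lemma reach1 j v : iter j s v = r -> fconnect t v r.
Proof.
elim: j v => [|j IH] v Hj; first by rewrite -Hj connect0.
have Hv : fconnect s v r by rewrite -Hj fconnect_iter.
apply: connect_trans (fconnect1 _ _) _; rewrite t_eq_s //.
by apply: IH; rewrite -iterSr.
Qed.

Lemma reachP v : fconnect F x v -> fconnect t v x.
Proof.
move=> Hv.
have H : forall m, m <= k -> iter m t (iter m F x) = x.
  elim=> [|m IH] Hm //; rewrite iterSr t_path ?IH ?(ltnW Hm) //; exact: HF.
have Hj : findex F x v <= k by exact: (findex_le HF Hv).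
have Ej : iter (findex F x v) t v = x by have := H _ Hj; rewrite iter_findex.
by rewrite -Ej fconnect_iter.
Qed.

Lemma reach3 j v : iter j F v = c -> fconnect t v r.
Proof.
elim: j v => [|j IH] v Hj.
  move: Hj => /= ->; apply: connect_trans (reachP HF) _.
  apply: connect_trans (fconnect1 _ _) _; rewrite /t ffunE eqxx.
  exact: reach1 (iter_findex Hy).
case Hv: (fconnect F x v).
  apply: connect_trans (reachP Hv) _.
  apply: connect_trans (fconnect1 _ _) _; rewrite /t ffunE eqxx.
  exact: reach1 (iter_findex Hy).
apply: connect_trans (fconnect1 _ _) _; rewrite /t t_out ?Hv //.
by apply: IH; rewrite -iterSr.
Qed.

Lemma t_reach v : fconnect t v r.
Proof.
case Hv: (fconnect s v r); first exact: reach1 (iter_findex Hv).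
have [w /andP [Hw Hvw]] := cycle_of_noreach (negbT Hv).
have Hvc : fconnect s v c := connect_trans Hvw (HU Hw).
have HvcF : fconnect F v c by apply: reach_agree Hvc => u Hu; rewrite Fc_n.
exact: reach3 (iter_findex HvcF).
Qed.

Lemma t_r : t r = r.
Proof. by rewrite t_eq_s ?connect0. Qed.

Lemma t_assign : assignment e r t.
Proof.
apply/andP; split; first by rewrite t_r.
apply/forallP => v; apply/implyP => Hvr.
rewrite /t ffunE; case: eqP => [->|/eqP Hvx] //.
case Hv: (fconnect F x v); last first.
  have Hvc : v != c.
    by apply/eqP => E; move: Hv; rewrite E HF.
  by rewrite Fc_n // Hse.
set j := findex F x v.
have Hj0 : 0 < j by rewrite lt0n findex_eq0 eq_sym.
have Hjk : j <= k by exact: (findex_le HF Hv).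
set u := iter j.-1 F x.
have Huv : F u = v by rewrite /u -iterS prednK // iter_findex.
have Huc : u != c.
  by apply: findex_min HF _; rewrite (leq_trans _ Hjk) // prednK.
have Hur : u != r.
  apply/eqP => E; move: (notB (connect0 _ r)); rewrite -{1}E.
  by rewrite inP_B // fconnect_iter.
rewrite Hsym -Huv /F Fc_n //; exact: Hse.
Qed.

Lemma t_acyc : acyclic_assignment r t.
Proof. apply: acyc_of_reach; [exact: t_r | exact: t_reach]. Qed.

End Enc.

Lemma cross (T : finType) (e : rel T) (P : pred T) a b :
  connect e a b -> P a -> ~~ P b -> exists x y, [&& P x, ~~ P y & e x y].
Proof.
move=> /connectP [p Hp ->] {b}; elim: p a Hp => [|z p IH] a /=.
  by move=> _ ->.
case/andP=> Haz Hp Pa; case Pz: (P z).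
  exact: IH.
by move=> _; exists a, z; rewrite Pa Pz Haz.
Qed.

Lemma on_cycle_next (T : finType) (r : T) (s : {ffun T -> T}) c :
  s r = r -> on_cycle r s c -> on_cycle r s (s c).
Proof.
move=> Hsr /andP [Hc /existsP [k /eqP Hk]]; apply/andP; split.
  apply/eqP => E; move/eqP: Hc; apply.
  by rewrite -Hk iterSr E iter_fix.
by apply/existsP; exists k; rewrite -iterSr iterS Hk.
Qed.

Lemma unicyc_HU (T : finType) (r : T) (s : {ffun T -> T}) c :
  unicyclic_assignment r s -> on_cycle r s c ->
  forall w, on_cycle r s w -> fconnect s w c.
Proof.
move=> /andP [_ /forallP H] Hc w Hw.
move/forallP: (H w) => /(_ c); rewrite Hw Hc /= => /existsP [k /eqP <-].
exact: fconnect_iter.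
Qed.

Definition c0 (T : finType) (r : T) (s : {ffun T -> T}) := odflt r [pick c | on_cycle r s c].
Definition cb (T : finType) (r : T) (s : {ffun T -> T}) (b : bool) :=
  if b then c0 r s else s (c0 r s).
Definition xy (T : finType) (e : rel T) (r : T) (s : {ffun T -> T}) c :=
  odflt (r, r) [pick p : T * T | [&& fconnect s p.1 c, fconnect s p.2 r & e p.1 p.2]].
Definition enc (T : finType) (e : rel T) (r : T) (p : {ffun T -> T} * bool) :=
  let s := p.1 in let c := cb r s p.2 in let q := xy e r s c in
  ((tt s c q.1 q.2, q.1), (c, s c)).

Lemma c0_cyc (T : finType) (r : T) (s : {ffun T -> T}) :
  unicyclic_assignment r s -> on_cycle r s (c0 r s).
Proof.
move=> /andP [/existsP [v Hv] _]; rewrite /c0.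
by case: pickP => [c Hc | H] //=; move: (H v); rewrite Hv.
Qed.

Section Main.
Variables (T : finType) (e : rel T) (r : T).
Hypothesis Hsym : symmetric e.
Hypothesis Hirr : irreflexive e.
Hypothesis Hcon : connected_graph e.

Let S1 := [set s : {ffun T -> T} | assignment e r s && unicyclic_assignment r s].
Let S0 := [set s : {ffun T -> T} | assignment e r s && acyclic_assignment r s].
Let Arcs := [set p : T * T | e p.1 p.2].

Section OneS.
Variables (s : {ffun T -> T}) (c : T).
Hypothesis Has : assignment e r s.
Hypothesis Hu : unicyclic_assignment r s.
Hypothesis Hc : on_cycle r s c.

Lemma Hsr : s r = r. Proof. by case/andP: Has => /eqP. Qed.
Lemma Hse v : v != r -> e v (s v).
Proof. by case/andP: Has => _ /forallP /(_ v) /implyP. Qed.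

Lemma xy_spec : let q := xy e r s c in
  [&& fconnect s q.1 c, fconnect s q.2 r & e q.1 q.2].
Proof.
rewrite /xy; case: pickP => [q Hq | H] //=; exfalso.
have Pc : ~~ fconnect s c r.
  apply/negP => H1; case/andP: Hc => /eqP Hcr /existsP [j /eqP Hj].
  exact: Hcr (periodic_noreach Hsr Hj H1).
have [x [y /and3P [Px Py Hxy]]] :=
  cross (P := fun v => ~~ fconnect s v r) (Hcon c r) Pc (negbT (negbF (connect0 _ r))).
have [w /andP [Hw Hxw]] := cycle_of_noreach Px.
have Hxc := connect_trans Hxw (unicyc_HU Hu Hc Hw).
by move: (H (x, y)); rewrite /= Hxc Hxy (negbNE Py).
Qed.

Lemma enc_props : let q := xy e r s c in
  [/\ tt s c q.1 q.2 \in S0, q.1 != r &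
      dec (tt s c q.1 q.2) q.1 c (s c) = s].
Proof.
move=> q; case/and3P: xy_spec => Hx Hy Hxy.
have HU := unicyc_HU Hu Hc.
split.
- rewrite inE; apply/andP; split.
    exact: (t_assign Hsym Hsr Hse Hc Hx Hxy).
  exact: (t_acyc Hsr HU Hc Hx Hy).
- exact: (x_ne_r Hsr Hc Hx).
- apply: decode; exact: (HF Hx).
Qed.

End OneS.

Lemma cb_cyc s b : assignment e r s -> unicyclic_assignment r s ->
  on_cycle r s (cb r s b).
Proof.
move=> Has Hu; case: b; rewrite /cb; first exact: c0_cyc.
apply: on_cycle_next; [exact: Hsr | exact: c0_cyc].
Qed.

Lemma card_main : #|S1| * 2 <= #|S0| * #|T|.-1 * #|Arcs|.
Proof.
have -> : #|S1| * 2 = #|setX S1 [set: bool]| by rewrite cardsX cardsT card_bool.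
have -> : #|S0| * #|T|.-1 * #|Arcs| = #|setX (setX S0 [set~ r]) Arcs|.
  by rewrite !cardsX cardsC1.
rewrite -(@card_in_imset _ _ (enc e r)).
  apply: subset_leq_card; apply/subsetP => q /imsetP [[s b] Hp ->].
  move: Hp; rewrite in_setX !inE andbT => /andP [Has Hu].
  have Hc := cb_cyc b Has Hu.
  have [H1 H2 _] := enc_props Has Hu Hc.
  move: H1; rewrite inE /enc /= => ->; rewrite H2 /=.
  apply: Hse => //; by case/andP: Hc.
move=> [s1 b1] [s2 b2]; rewrite !in_setX !inE !andbT /=.
move=> /andP [Has1 Hu1] /andP [Has2 Hu2] [Et Ex Ec Esc].
have Hc1 := cb_cyc b1 Has1 Hu1.
have Hc2 := cb_cyc b2 Has2 Hu2.
have [_ _ D1] := enc_props Has1 Hu1 Hc1.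
have [_ _ D2] := enc_props Has2 Hu2 Hc2.
have Es : s1 = s2 by rewrite -D1 -D2 Et Ex Esc Ec.
subst s2; congr (_, _).
have Hne : s1 (c0 r s1) != c0 r s1.
  apply/eqP => E; have Hc0 := c0_cyc Hu1.
  have := Hse Has1 (v := c0 r s1); rewrite E Hirr => H.
  by case/andP: Hc0 => /H.
move: Ec; clear -Hne; rewrite /cb; case: b1; case: b2 => //= E.
  by move: Hne; rewrite -E eqxx.
by move: Hne; rewrite E eqxx.
Qed.

Lemma card_arcs : #|Arcs| <= 2 * num_edges e.
Proof.
rewrite /num_edges mulnC.
set Ed := [set E : {set T} | _].
have -> : #|Ed| * 2 = #|setX Ed [set: bool]| by rewrite cardsX cardsT card_bool.
pose g (p : T * T) := ([set p.1; p.2], (enum_rank p.1 < enum_rank p.2)%N).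
rewrite -(@card_in_imset _ _ g).
  apply: subset_leq_card; apply/subsetP => q /imsetP [[a b] Hp ->].
  rewrite in_setX /= in_setT andbT inE; apply/existsP; exists a; apply/existsP; exists b.
  by rewrite eqxx; rewrite inE in Hp.
move=> [a b] [a' b']; rewrite !inE /= => Hab Hab' [E Er].
have Hne : a != b by apply/eqP => E'; move: Hab; rewrite E' Hirr.
have Ha : a \in [set a'; b'] by rewrite -E !inE eqxx.
have Hb : b \in [set a'; b'] by rewrite -E !inE eqxx orbT.
case/set2P: Ha => Ea; case/set2P: Hb => Eb; subst.
- by move: Hne; rewrite eqxx.
- by [].
- move: Er; case: (ltngtP (enum_rank b') (enum_rank a')) => // /val_inj/enum_rank_inj E'.
  by move: Hne; rewrite E' eqxx.
- by move: Hne; rewrite eqxx.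
Qed.

End Main.

Unset Implicit Arguments.
Local Open Scope ring_scope.

Theorem theorem18 (T : finType) (e : rel T) (r : T) :
  simple_graph e -> connected_graph e ->
  ((Z_tree1 e r)%:R / (Z_tree0 e r)%:R : rat) <= ((num_edges e * #|T|)%N)%:R.
Proof.
move=> [Hsym Hirr] Hcon.
have H1 : (Z_tree1 e r * 2 <= Z_tree0 e r * #|T|.-1 * #|[set p : T * T | e p.1 p.2]|)%N.
  exact: card_main.
have H2 : (#|[set p : T * T | e p.1 p.2]| <= 2 * num_edges e)%N.
  exact: card_arcs.
have Hle : (Z_tree1 e r <= num_edges e * #|T| * Z_tree0 e r)%N.
  have H3 := leq_trans H1 (leq_mul (leqnn (Z_tree0 e r * #|T|.-1)) H2).
  have H4 : (#|T|.-1 <= #|T|)%N := leq_pred _.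
  nia.
case: (posnP (Z_tree0 e r)) => H0.
  by rewrite H0 invr0 mulr0 ler0n.
by rewrite ler_pdivrMr ?ltr0n // -natrM ler_nat.
Qed.
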